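(* Let $A\in\mathbb{R}^{m\times n}$ be semi-monotone, let $A=P_1-R_1+S_1$ be a double proper weak regular splitting and $A=P_2-R_2+S_2$ a double proper regular splitting of $A$. Suppose $N(S_2)\supseteq N(P_2)$, $R(S_2)\subseteq R(P_2)$, $1\notin\sigma(S_2P_1^{\dagger})$, $\widehat{A}^{\dagger}\geq 0$ where $\widehat{A}=(I-S_2P_1^{\dagger})A$, $P_1^{\dagger}R_1\geq P_2^{\dagger}R_2$ and $P_2^{\dagger}S_2\geq P_1^{\dagger}S_1$. Then $\rho(W_{12})\leq\min\{\rho(T_1),\rho(T_2)\}<1$, where $$W_{12}=\begin{pmatrix} P_2^{\dagger}R_2-P_2^{\dagger}S_2P_1^{\dagger}R_1 & P_2^{\dagger}S_2P_1^{\dagger}S_1\\ I & 0\end{pmatrix},\qquad T_i=\begin{pmatrix} P_i^{\dagger}R_i & -P_i^{\dagger}S_i\\ I&0\end{pmatrix}\ (i=1,2).$$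
   Context: For $M\in\mathbb{R}^{m\times n}$, $M^{\dagger}$ is its Moore–Penrose inverse, $R(M)$, $N(M)$ its range and null space; inequalities are entrywise; $\rho$ is the spectral radius, $\sigma$ the spectrum. $A$ is semi-monotone if $A^{\dagger}\geq 0$. A double splitting $A=P-R+S$ is a double proper splitting if $R(P)=R(A)$ and $N(P)=N(A)$; it is double proper regular if moreover $P^{\dagger}\geq0$, $R\geq0$, $S\leq0$; double proper weak regular if moreover $P^{\dagger}\geq 0$, $P^{\dagger}R\geq 0$, $P^{\dagger}S\leq 0$. *)

(* Defs.v *)
From HB Require Import structures.
From mathcomp Require Import all_boot all_order all_algebra.
From mathcomp Require Import reals.
From mathcomp Require Import complex.
Set Implicit Arguments. Unset Strict Implicit. Unset Printing Implicit Defensive.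
Import Order.TTheory GRing.Theory Num.Theory.
Local Open Scope ring_scope.

Section Defs.
Variable R : realType.

Definition mx_le m n (B C : 'M[R]_(m, n)) : Prop := forall i j, B i j <= C i j.
Definition mx_nonneg m n (B : 'M[R]_(m, n)) : Prop := mx_le 0 B.
Definition mx_nonpos m n (B : 'M[R]_(m, n)) : Prop := mx_le B 0.

Definition is_MP m n (M : 'M[R]_(m, n)) (X : 'M[R]_(n, m)) : Prop :=
  [/\ M *m X *m M = M, X *m M *m X = X,
      (M *m X)^T = M *m X & (X *m M)^T = X *m M].

Definition in_range m n (M : 'M[R]_(m, n)) (y : 'cV[R]_m) : Prop :=
  exists x : 'cV[R]_n, y = M *m x.
Definition in_null m n (M : 'M[R]_(m, n)) (x : 'cV[R]_n) : Prop :=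
  M *m x = 0.

Definition double_proper_splitting m n (A P Rm S : 'M[R]_(m, n)) : Prop :=
  [/\ A = P - Rm + S,
      (forall y, in_range P y <-> in_range A y) &
      (forall x, in_null P x <-> in_null A x)].

Definition double_proper_regular m n (A P Rm S : 'M[R]_(m, n))
    (Pd : 'M[R]_(n, m)) : Prop :=
  [/\ double_proper_splitting A P Rm S, is_MP P Pd,
      mx_nonneg Pd, mx_nonneg Rm & mx_nonpos S].

Definition double_proper_weak_regular m n (A P Rm S : 'M[R]_(m, n))
    (Pd : 'M[R]_(n, m)) : Prop :=
  [/\ double_proper_splitting A P Rm S, is_MP P Pd,
      mx_nonneg Pd, mx_nonneg (Pd *m Rm) & mx_nonpos (Pd *m S)].

Definition complexify k (M : 'M[R]_k) : 'M[R[i]]_k := map_mx (fun x => x%:C%C) M.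

Definition spectrum k (M : 'M[R]_k) : pred R[i] :=
  fun z => eigenvalue (complexify M) z.

Definition eigvals k (M : 'M[R]_k) : seq R[i] :=
  sval (closed_field_poly_normal (char_poly (complexify M))).

Definition spectral_radius k (M : 'M[R]_k) : R :=
  \big[Num.max/0]_(z <- eigvals M) Normc.normc z.

End Defs.

(* Main.v *)
Require Import Defs.
From HB Require Import structures.
From mathcomp Require Import all_boot all_order all_algebra.
From mathcomp Require Import reals.
From mathcomp Require Import complex.
From mathcomp Require Import classical_sets polyrcf.
From mathcomp Require Import ring lra.
Import Order.TTheory GRing.Theory Num.Theory.
Local Open Scope ring_scope.

Section PFsec.
Variable R : realType.
Implicit Types (k : nat).

Lemma eigvalsP {k} (M : 'M[R]_k) :
  char_poly (complexify M) = \prod_(z <- eigvals M) ('X - z%:P).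
Proof.
rewrite /eigvals; case: closed_field_poly_normal => s /= hs.
by rewrite {1}hs (monicP (char_poly_monic _)) scale1r.
Qed.

Lemma root_eigvals {k} (M : 'M[R]_k) z :
  root (char_poly (complexify M)) z = (z \in eigvals M).
Proof. by rewrite eigvalsP root_prod_XsubC. Qed.

Lemma size_eigvals {k} (M : 'M[R]_k) : size (eigvals M) = k.
Proof.
have := size_char_poly (complexify M).
by rewrite eigvalsP size_prod_XsubC => -[].
Qed.

Lemma normc_ge0 (z : R[i]) : 0 <= Normc.normc z.
Proof. by rewrite -lecR; exact: (normr_ge0 z). Qed.

Lemma sr_ge0 {k} (M : 'M[R]_k) : 0 <= spectral_radius M.
Proof.
rewrite /spectral_radius; elim: (eigvals M) => [|z s IH].
  by rewrite big_nil.
by rewrite big_cons le_max IH orbT.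
Qed.

Lemma sr_ub {k} (M : 'M[R]_k) z : z \in eigvals M -> Normc.normc z <= spectral_radius M.
Proof.
rewrite /spectral_radius; elim: (eigvals M) => [|y s IH] //.
rewrite inE big_cons le_max => /orP [/eqP ->|/IH ->]; first by rewrite lexx.
by rewrite orbT.
Qed.

Lemma sr_att {k} (M : 'M[R]_k) : 0 < spectral_radius M ->
  exists2 z, z \in eigvals M & Normc.normc z = spectral_radius M.
Proof.
rewrite /spectral_radius; elim: (eigvals M) => [|y s IH].
  by rewrite big_nil ltxx.
rewrite big_cons => H.
have [le|lt] := leP (Normc.normc y) (\big[Num.max/0]_(z <- s) Normc.normc z).
  rewrite max_r // in H *; have [z zs e] := IH H.
  by exists z => //; rewrite inE zs orbT.
by exists y; rewrite ?inE ?eqxx // max_l // ltW.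
Qed.

Lemma char_poly_tr {k} (M : 'M[R]_k) :
  char_poly (complexify M^T) = char_poly (complexify M).
Proof.
rewrite /complexify -map_trmx /char_poly /char_poly_mx -det_tr.
congr (\det _); apply/matrixP => i j; rewrite !mxE.
by rewrite eq_sym.
Qed.

Lemma sr_tr {k} (M : 'M[R]_k) : spectral_radius M^T = spectral_radius M.
Proof. by rewrite /spectral_radius /eigvals char_poly_tr. Qed.

Lemma sr_k0 {k} (M : 'M[R]_k) : 0 < spectral_radius M -> (0 < k)%N.
Proof.
move: M; case: k => [|k] M //; rewrite /spectral_radius.
have := size_eigvals M; rewrite /=; case: (eigvals M) => // _.
by rewrite big_nil ltxx.
Qed.


Definition nn {m n} (B : 'M[R]_(m,n)) := forall i j, 0 <= B i j.

Lemma map_cpm {k} (M : 'M[R]_k) t :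
  map_mx (horner_eval t) (char_poly_mx M) = t%:M - M.
Proof.
apply/matrixP => i j; rewrite !mxE /= horner_evalE.
by rewrite hornerD hornerN hornerMn hornerX hornerC.
Qed.

Lemma det_char {k} (M : 'M[R]_k) t : \det (t%:M - M) = (char_poly M).[t].
Proof.
by rewrite /char_poly -horner_evalE -det_map_mx map_cpm.
Qed.

Lemma normc_real (a : R) : Normc.normc (a%:C)%C = `|a|.
Proof. by rewrite /Normc.normc /= expr0n /= addr0 sqrtr_sqr. Qed.

Lemma real_root_sr {k} {M : 'M[R]_k} {t} :
  root (char_poly M) t -> `|t| <= spectral_radius M.
Proof.
move=> rt; rewrite -normc_real; apply: sr_ub; rewrite -root_eigvals.
rewrite /complexify.
have -> : map_mx (fun x : R => (x%:C)%C) M = map_mx (real_complex R) M by [].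
rewrite -map_char_poly; apply/rootP.
by rewrite horner_map (rootP rt) rmorph0.
Qed.

Lemma charpoly_pos {k} {M : 'M[R]_k} {t} :
  spectral_radius M < t -> 0 < (char_poly M).[t].
Proof.
move=> lt; set p := char_poly M.
have lc : lead_coef p = 1 by apply/monicP/char_poly_monic.
have lcp : 0 < lead_coef p by rewrite lc ltr01.
have [n0 hn0] := poly_pinfty_gt_lc lcp.
set b := Num.max t n0.
have pb : 0 < p.[b] by apply: lt_le_trans (hn0 _ _); rewrite ?lc ?ltr01 // le_max lexx orbT.
rewrite ltNge; apply/negP => pt.
have tb : t <= b by rewrite le_max lexx.
have hm : p.[t] <= 0 <= p.[b] by rewrite pt (ltW pb).
have [x xin rx] := poly_ivt tb hm.
move: xin => /andP[tx _].
have := real_root_sr rx.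
have sr0 := sr_ge0 M.
move=> h; have : x <= spectral_radius M by apply: le_trans h; exact: ler_norm.
by rewrite leNgt (lt_le_trans lt tx).
Qed.

Lemma inv_uniq {k} (B C : 'M[R]_k) : B *m C = 1%:M -> invmx B = C.
Proof.
move=> h; have [uB _] := mulmx1_unit h.
by rewrite -[invmx B]mulmx1 -h mulmxA mulVmx // mul1mx.
Qed.

Lemma Zmono {k} (N : 'M[R]_k) c (x : 'cV[R]_k) :
  nn N -> (forall i, \sum_j N i j < c) ->
  (forall i, 0 <= (c *: x - N *m x) i 0) -> forall i, 0 <= x i 0.
Proof.
move=> N0 rs H i; rewrite leNgt; apply/negP => xi.
have [j0 _ hj0] := @arg_minP _ _ _ i predT (fun j => x j 0) isT.
have xj0 : x j0 0 < 0 by apply: le_lt_trans xi; exact: hj0.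
have := H j0; rewrite !mxE.
have : \sum_j N j0 j * x j 0 >= \sum_j N j0 j * x j0 0.
  by apply: ler_sum => j _; apply: ler_wpM2l; [exact: N0| exact: hj0].
rewrite -mulr_suml => hs hc.
have : c * x j0 0 < (\sum_j N j0 j) * x j0 0 by rewrite ltr_nM2r.
move=> /lt_le_trans /(_ hs) h2.
by move: hc; rewrite subr_ge0 leNgt h2.
Qed.

Lemma Zinv {k} (B : 'M[R]_k) :
  (forall x : 'cV[R]_k, (forall i, 0 <= (B *m x) i 0) -> forall i, 0 <= x i 0) ->
  B \in unitmx /\ nn (invmx B).
Proof.
move=> H.
have uB : B \in unitmx.
  rewrite unitmxE unitfE -det_tr; apply/negP => /det0P [v vn0].
  move=> /(congr1 trmx); rewrite trmx_mul trmxK trmx0 => hv.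
  have h1 := H v^T; have h2 := H (- v^T).
  move/negP: vn0; apply; apply/eqP/matrixP => i j; rewrite (ord1 i) !mxE.
  have a : 0 <= v^T j 0 by apply: h1 => l; rewrite hv mxE.
  have b : 0 <= (- v^T) j 0 by apply: h2 => l; rewrite mulmxN hv oppr0 mxE.
  move: a b; rewrite !mxE => a b; apply/eqP; rewrite eq_le; apply/andP; split.
    by rewrite -oppr_ge0.
  by [].
split=> // i j.
have h := H (invmx B *m delta_mx j 0).
rewrite mulmxA mulmxV // mul1mx in h.
have hd : forall l, 0 <= (delta_mx j 0 : 'cV[R]_k) l 0.
  by move=> l; rewrite mxE; case: eqP => _ //=; case: eqP => _ //=.
move: (h hd i).
rewrite mxE (bigD1 j) //= mxE !eqxx /= mulr1 big1 ?addr0 // => l /negPf nl.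
by rewrite mxE nl /= mulr0.
Qed.
Definition nnb {m n} (B : 'M[R]_(m,n)) := [forall i, forall j, 0 <= B i j].

Lemma nnbP {m n} (B : 'M[R]_(m,n)) : reflect (nn B) (nnb B).
Proof.
apply: (iffP forallP) => [H i j|H i]; first by move/forallP: (H i).
by apply/forallP.
Qed.

Lemma nn_mul {m n p} {A : 'M[R]_(m,n)} {B : 'M[R]_(n,p)} : nn A -> nn B -> nn (A *m B).
Proof.
move=> hA hB i j; rewrite mxE; apply: sumr_ge0 => l _; exact: mulr_ge0.
Qed.

Lemma adj_eval {k} (M : 'M[R]_k) t :
  map_mx (horner_eval t) (\adj (char_poly_mx M)) = \adj (t%:M - M).
Proof. by rewrite map_mx_adj map_cpm. Qed.

Lemma inv_entry {k} (M : 'M[R]_k) t : (char_poly M).[t] != 0 ->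
  invmx (t%:M - M) = ((char_poly M).[t])^-1 *: map_mx (horner_eval t) (\adj (char_poly_mx M)).
Proof.
move=> h; rewrite /invmx unitmxE det_char unitfE h adj_eval.
by [] || rewrite det_char.
Qed.

Lemma poly_rc (q : {poly R}) t0 : (forall t, t0 < t -> 0 <= q.[t]) -> 0 <= q.[t0].
Proof.
move=> H; rewrite leNgt; apply/negP => hq.
have e0 : 0 < - q.[t0] by rewrite oppr_gt0.
have [d d0 hd] := poly_cont t0 q e0.
have d2 : 0 < d / 2 by rewrite divr_gt0.
have := hd (t0 + d / 2); rewrite addrC addKr ger0_norm ?(ltW d2) //.
rewrite ltr_pdivrMr // ltr_pMr // ltr1n => /(_ isT) h.
have := H (t0 + d / 2); rewrite ltrDl => /(_ d2) h2.
have := le_lt_trans (ler_norm _) h; rewrite ltrBlDr addNr.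
by rewrite ltNge h2.
Qed.

Lemma closed_good {k} (M : 'M[R]_k) t0 : 0 < (char_poly M).[t0] ->
  (forall t, t0 < t -> 0 < (char_poly M).[t] /\ nn (invmx (t%:M - M))) ->
  nn (invmx (t0%:M - M)).
Proof.
move=> p0 H i j; rewrite inv_entry ?gt_eqF // !mxE /= horner_evalE.
apply: mulr_ge0; first by rewrite invr_ge0 ltW.
apply: poly_rc => t lt; have [pt nt] := H t lt.
have := nt i j; rewrite inv_entry ?gt_eqF // !mxE /= horner_evalE.
by rewrite pmulr_rge0 // invr_gt0.
Qed.

Lemma perturb {k} (M : 'M[R]_k) t0 : (t0%:M - M) \in unitmx -> nn (invmx (t0%:M - M)) ->
  exists2 d, 0 < d & forall t, t0 - d < t -> t <= t0 -> nn (invmx (t%:M - M)).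
Proof.
move=> u0 n0; set N0 := invmx (t0%:M - M).
set s := \sum_i \sum_j N0 i j.
have s0 : 0 <= s by apply: sumr_ge0 => i _; apply: sumr_ge0 => j _; exact: n0.
have rs : forall i, \sum_j N0 i j <= s.
  move=> i; rewrite /s [X in _ <= X](bigD1 i) //= lerDl; apply: sumr_ge0 => l _.
  by apply: sumr_ge0 => j _; exact: n0.
exists (s + 1)^-1; first by rewrite invr_gt0 ltr_wpDl.
move=> t lt le; set d := t0 - t.
have d0 : 0 <= d by rewrite subr_ge0.
have dlt : d * (s + 1) < 1.
  by rewrite -ltr_pdivlMr ?ltr_wpDl // div1r /d ltrBlDr addrC -ltrBlDr.
have [uB nB] : (1%:M - d *: N0) \in unitmx /\ nn (invmx (1%:M - d *: N0)).
  apply: Zinv => x hx; apply: (@Zmono _ (d *: N0) 1).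
  - by move=> i j; rewrite mxE mulr_ge0.
  - move=> i; under eq_bigr do rewrite mxE; rewrite -mulr_sumr.
    apply: le_lt_trans dlt; apply: ler_wpM2l => //.
    by apply: le_trans (rs i) _; rewrite lerDl.
  - by move=> i; move: (hx i); rewrite mulmxBl mul1mx scale1r.
have eq : t%:M - M = (t0%:M - M) *m (1%:M - d *: N0).
  rewrite mulmxBr mulmx1 -scalemxAr mulmxV // scalemx1 /d.
  apply/matrixP => i j; rewrite !mxE mulrnBl; ring.
suff -> : invmx (t%:M - M) = invmx (1%:M - d *: N0) *m N0 by apply: nn_mul.
apply: inv_uniq; rewrite eq -mulmxA [X in _ *m X]mulmxA mulmxV // mul1mx.
by rewrite mulmxV.
Qed.
Lemma resolvent {k} {M : 'M[R]_k} {t} : nn M -> spectral_radius M < t ->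
  (t%:M - M) \in unitmx /\ nn (invmx (t%:M - M)).
Proof.
move=> nM lt.
have pos : forall s, spectral_radius M < s -> (s%:M - M) \in unitmx.
  by move=> s hs; rewrite unitmxE det_char unitfE gt_eqF // charpoly_pos.
split; first exact: pos.
case: (boolP (nnb (invmx (t%:M - M)))) => [/nnbP //|bad0].
set c0 := Num.max t (\sum_i \sum_j M i j) + 1.
have goodbig : forall s, c0 <= s -> nnb (invmx (s%:M - M)).
  move=> s hs; apply/nnbP; apply: (proj2 (@Zinv _ (s%:M - M) _)).
  move=> x hx; apply: (@Zmono _ M s) => //.
    move=> i.
    have h1 : \sum_j M i j <= \sum_i \sum_j M i j.
      rewrite [X in _ <= X](bigD1 i) //= lerDl; apply: sumr_ge0 => l _.
      by apply: sumr_ge0 => j _; exact: nM.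
    have h2 : \sum_i \sum_j M i j < c0.
      have h2' : \sum_i \sum_j M i j <= Num.max t (\sum_i \sum_j M i j).
        by rewrite le_max lexx orbT.
      by rewrite /c0; apply: le_lt_trans h2' _; rewrite ltrDl ltr01.
    exact: le_lt_trans h1 (lt_le_trans h2 hs).
  by move=> i; move: (hx i); rewrite mulmxBl mul_scalar_mx.
pose E := (fun s => t <= s /\ ~~ nnb (invmx (s%:M - M))) : set R.
have hE : has_sup E.
  split; first by exists t; split.
  exists c0 => s [_ hs]; rewrite leNgt; apply/negP => lt'.
  by move: hs; rewrite goodbig // ltW.
set S := sup E.
have tS : t <= S by apply: (sup_upper_bound hE).
have srS : spectral_radius M < S by apply: lt_le_trans tS.
have goodR : forall s, S < s -> 0 < (char_poly M).[s] /\ nn (invmx (s%:M - M)).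
  move=> s hs; split; first by apply: charpoly_pos; apply: lt_trans hs.
  case: (boolP (nnb (invmx (s%:M - M)))) => [/nnbP //|bs].
  have : s <= S by apply: (sup_upper_bound hE); split=> //; exact: (le_trans tS (ltW hs)).
  by rewrite leNgt hs.
have gS := @closed_good _ M S (@charpoly_pos _ M S srS) goodR.
have [d d0 hd] := @perturb _ M S (pos S srS) gS.
have [e [te be] he] := sup_adherent d0 hE.
have : nn (invmx (e%:M - M)).
  by apply: hd => //; exact: (sup_upper_bound hE).
by move/nnbP; rewrite (negbTE be).
Qed.

Lemma normC_real (a : R) : `|(a%:C)%C| = (`|a|%:C)%C.
Proof. by rewrite -normc_real. Qed.

Lemma eig_bound {k} (M : 'M[R]_k) (x : 'rV[R]_k) t z : nn M ->
  (forall j, 0 < x 0 j) -> (forall j, (x *m M) 0 j < t * x 0 j) ->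
  z \in eigvals M -> Normc.normc z < t.
Proof.
move=> nM xp hx; rewrite -root_eigvals -eigenvalue_root_char.
move=> /eigenvalueP [v hv vn0].
have [j1 vj1] : exists j1, v 0 j1 != 0.
  apply/existsP; move: vn0; apply: contraR; rewrite negb_exists => /forallP h.
  by apply/eqP/matrixP => i j; rewrite (ord1 i) mxE; apply/eqP; move: (h j); rewrite negbK.
pose f j := Normc.normc (v 0 j) / x 0 j.
have [j0 _ hj0] := @arg_maxP _ _ _ j1 predT f isT.
set c := f j0.
have nv1 : 0 < Normc.normc (v 0 j1).
  rewrite lt_neqAle normc_ge0 andbT eq_sym; apply/negP => /eqP /Normc.eq0_normc.
  by move/eqP; rewrite (negbTE vj1).
have c_pos : 0 < c by apply: lt_le_trans (hj0 j1 isT); rewrite divr_gt0.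
have hb : forall j, Normc.normc (v 0 j) <= c * x 0 j.
  by move=> j; rewrite -ler_pdivrMr //; exact: hj0.
have e0 : Normc.normc (v 0 j0) = c * x 0 j0 by rewrite /c /f divfK // gt_eqF.
have ev : z * v 0 j0 = \sum_i v 0 i * (M i j0)%:C%C.
  move/matrixP: hv => /(_ 0 j0); rewrite !mxE => <-.
  by apply: eq_bigr => i _; rewrite mxE.
have nvj0 : 0 < `|v 0 j0|.
  by rewrite -[`|_|]/((Normc.normc _)%:C)%C ltcR e0 mulr_gt0.
have key : `|z| * `|v 0 j0| < t%:C%C * `|v 0 j0|.
  rewrite -normrM ev.
  apply: le_lt_trans (ler_norm_sum _ _ _) _.
  have s1 : \sum_i `|v 0 i * (M i j0)%:C%C| <= \sum_i ((c * x 0 i)%:C%C * (M i j0)%:C%C).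
    apply: ler_sum => i _; rewrite normrM normC_real (ger0_norm (nM i j0)).
    apply: ler_wpM2r; first by rewrite lecR.
    by rewrite -[`|v 0 i|]/((Normc.normc _)%:C)%C lecR.
  apply: le_lt_trans s1 _.
  rewrite -[`|v 0 j0|]/((Normc.normc _)%:C)%C e0 -!rmorphM /=.
  under eq_bigr do rewrite -rmorphM.
  rewrite -rmorph_sum ltcR.
  under eq_bigr do rewrite -mulrA; rewrite -mulr_sumr mulrCA ltr_pM2l //.
  by move: (hx j0); rewrite mxE.
rewrite ltr_pM2r // in key.
by rewrite -ltcR.
Qed.
Lemma sr_root {k} (M : 'M[R]_k) : nn M -> 0 < spectral_radius M ->
  (char_poly M).[spectral_radius M] = 0.
Proof.
move=> nM sp; set r := spectral_radius M.
case: (eqVneq (char_poly M).[r] 0) => // hne; exfalso.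
have p0 : 0 <= (char_poly M).[r].
  by apply: poly_rc => t lt; apply/ltW/charpoly_pos.
have pp : 0 < (char_poly M).[r] by rewrite lt_neqAle eq_sym hne.
have goodR : forall t, r < t -> 0 < (char_poly M).[t] /\ nn (invmx (t%:M - M)).
  by move=> t lt; split; [exact: charpoly_pos | exact: (proj2 (resolvent nM lt))].
have good := @closed_good _ M r pp goodR.
have u : (r%:M - M) \in unitmx by rewrite unitmxE det_char unitfE.
set N := invmx (r%:M - M) in good.
pose x := (const_mx 1 : 'rV[R]_k) *m N.
have hxM : x *m (r%:M - M) = const_mx 1 by rewrite -mulmxA mulVmx // mulmx1.
have xn : nn x by apply: nn_mul => // i j; rewrite mxE ler01.
clearbody x.
have hxM' : x *m M = r *: x - const_mx 1.
  by rewrite -hxM mulmxBr mul_mx_scalar opprB addrCA subrr addr0.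
have xM : forall j, (x *m M) 0 j = r * x 0 j - 1.
  by move=> j; rewrite hxM' !mxE.
have xMn : nn (x *m M) by apply: nn_mul.
have xpos : forall j, 0 < x 0 j.
  move=> j; have := xMn 0 j; rewrite xM subr_ge0 => h.
  have : 0 < r * x 0 j by apply: lt_le_trans h; exact: ltr01.
  by rewrite pmulr_rgt0.
have hx : forall j, (x *m M) 0 j < r * x 0 j by move=> j; rewrite xM ltrBlDr ltrDl ltr01.
have [z zin zn] := sr_att M sp.
by have := @eig_bound _ M x r z nM xpos hx zin; rewrite zn ltxx.
Qed.

Lemma sum_lt {I : finType} (f g : I -> nat) i0 :
  (forall i, (f i <= g i)%N) -> (f i0 < g i0)%N -> (\sum_i f i < \sum_i g i)%N.
Proof.
move=> H h; rewrite (bigD1 i0) //= [X in (_ < X)%N](bigD1 i0) //=.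
by rewrite -addSn leq_add // leq_sum.
Qed.

Lemma pf_aux {k} (M : 'M[R]_k) (r : R) : (0 < k)%N -> (char_poly M).[r] = 0 ->
  forall (n : nat) (B : 'M[{poly R}]_k) (q : {poly R}),
  (\sum_i \sum_j size (B i j) <= n)%N -> B != 0 -> char_poly_mx M *m B = q%:M ->
  (forall t, r < t -> forall i j, 0 <= (B i j).[t]) ->
  exists u : 'cV[R]_k, [/\ nn u, u != 0 & M *m u = r *: u].
Proof.
move=> k0 pr; elim=> [|n IH] B q hs Bn0 hB hpos.
  move: Bn0; rewrite leqn0 in hs; have: B = 0.
    apply/matrixP => i j; rewrite mxE; apply/eqP; rewrite -size_poly_eq0.
    move/eqP: hs => /eqP; rewrite sum_nat_eq0 => /forallP /(_ i).
    by rewrite sum_nat_eq0 => /forallP /(_ j).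
  by move=> ->; rewrite eqxx.
set Br := map_mx (horner_eval r) B.
have o0 : 'I_k := Ordinal k0.
case: (eqVneq Br 0) => [Br0|Brn0].
  set a := 'X - r%:P.
  have an0 : a != 0 by rewrite -size_poly_eq0 size_XsubC.
  pose B' := map_mx (fun b => b %/ a) B.
  have BB : forall i j, B i j = B' i j * a.
    move=> i j; rewrite mxE divpK // -root_factor_theorem; apply/rootP.
    by move/matrixP: Br0 => /(_ i j); rewrite !mxE /= horner_evalE.
  clearbody B'.
  have BB' : B = a *: B' by apply/matrixP => i j; rewrite mxE mulrC -BB.
  have B'n0 : B' != 0 by move: Bn0; apply: contraNneq => h; rewrite BB' h scaler0.
  set Q := char_poly_mx M *m B'.
  have hQ : a *: Q = q%:M by rewrite /Q scalemxAr -BB'.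
  have Qdef : char_poly_mx M *m B' = Q by [].
  clearbody Q.
  have hQ' : Q = (Q o0 o0)%:M.
    move/matrixP: hQ => hQ; have h0 := hQ o0 o0; rewrite !mxE eqxx /= mulr1n in h0.
    apply/matrixP => i j; have := hQ i j; rewrite !mxE -h0 => h.
    apply: (mulfI an0); rewrite h.
    by case: (i == j); rewrite ?mulr1n ?mulr0n ?mulr0.
  apply: (IH B' (Q o0 o0)); rewrite ?Qdef //.
  - have hsz : forall i j, (size (B' i j) <= size (B i j))%N.
      move=> i j; rewrite BB; case: (eqVneq (B' i j) 0) => [->|nz]; first by rewrite size_poly0.
      by rewrite size_mul // size_XsubC addn2.
    have : [exists i0, [exists j0, B' i0 j0 != 0]].
      apply: contraNT B'n0; rewrite negb_exists => /forallP h.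
      apply/eqP/matrixP => i j; rewrite mxE.
      by move: (h i); rewrite negb_exists => /forallP /(_ j); rewrite negbK => /eqP.
    move=> /existsP [i0 /existsP [j0 nz]].
    rewrite -ltnS; apply: leq_trans hs.
    apply: (@sum_lt _ (fun i => \sum_j size (B' i j)) (fun i => \sum_j size (B i j)) i0).
      by move=> i; apply: leq_sum => j _; exact: hsz.
    apply: (@sum_lt _ (fun j => size (B' i0 j)) (fun j => size (B i0 j)) j0) => //.     by rewrite [in X in (_ < X)%N]BB size_mul // size_XsubC addn2.
  - move=> t lt i j.
    have := hpos t lt i j; rewrite BB hornerM hornerXsubC.
    by rewrite pmulr_lge0 // subr_gt0.
have Brn : nn Br.
  move=> i j; rewrite mxE /= horner_evalE; apply: poly_rc => t lt; exact: hpos.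
have hev : (r%:M - M) *m Br = (q.[r])%:M.
  have := congr1 (map_mx (horner_eval r)) hB.
  by rewrite map_mxM map_cpm map_scalar_mx /= horner_evalE.
have qr : q.[r] = 0.
  apply/eqP; apply: contraT => nq; exfalso.
  have : (r%:M - M) *m ((q.[r])^-1 *: Br) = 1%:M.
    by rewrite -scalemxAr hev scale_scalar_mx mulVf.
  move/mulmx1_unit => [+ _]; rewrite unitmxE det_char pr unitfE.
  by rewrite eqxx.
rewrite qr in hev.
have : [exists j, col j Br != 0].
  apply: contraNT Brn0; rewrite negb_exists => /forallP h.
  apply/eqP/matrixP => i j; rewrite mxE.
  by move: (h j); rewrite negbK => /eqP /matrixP /(_ i 0); rewrite !mxE.
move=> /existsP [j nzj].
exists (col j Br); split => //.
  by move=> i l; rewrite mxE.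
have : (r%:M - M) *m col j Br = 0.
  by rewrite colE mulmxA hev mul_scalar_mx scale0r.
by rewrite mulmxBl mul_scalar_mx => /eqP; rewrite subr_eq0 => /eqP <-.
Qed.

Lemma PF {k} (M : 'M[R]_k) : nn M -> 0 < spectral_radius M ->
  exists u : 'cV[R]_k, [/\ nn u, u != 0 & M *m u = spectral_radius M *: u].
Proof.
move=> nM sp; have k0 := sr_k0 M sp.
have pr := @sr_root _ M nM sp.
have o0 : 'I_k := Ordinal k0.
apply: (@pf_aux _ M _ k0 pr _ (\adj (char_poly_mx M)) (char_poly M) (leqnn _)).
- apply/eqP => h; have := mul_mx_adj (char_poly_mx M); rewrite h mulmx0.
  move/matrixP => /(_ o0 o0); rewrite !mxE eqxx /= mulr1n => /esym /eqP.
  by rewrite -/(char_poly M) (negbTE (monic_neq0 (char_poly_monic M))).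
- exact: mul_mx_adj.
- move=> t lt i j.
  have pt := charpoly_pos lt.
  have [_ nn_] := resolvent nM lt.
  have := nn_ i j; rewrite inv_entry ?gt_eqF // !mxE /= horner_evalE.
  by rewrite pmulr_rge0 // invr_gt0.
Qed.

Lemma lower_bound {k} (M : 'M[R]_k) (z : 'cV[R]_k) a : nn M -> nn z -> z != 0 ->
  (forall i, a * z i 0 <= (M *m z) i 0) -> a <= spectral_radius M.
Proof.
move=> nM nz zn0 H; rewrite leNgt; apply/negP => lt.
have [u nN] := resolvent nM lt.
set w := (a%:M - M) *m z.
have wle : forall i, w i 0 <= 0.
  by move=> i; move: (H i); rewrite /w mulmxBl mul_scalar_mx !mxE subr_le0.
have ze : z = invmx (a%:M - M) *m w by rewrite /w mulmxA mulVmx // mul1mx.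
move/negP: zn0; apply; apply/eqP/matrixP => i j; rewrite (ord1 j) mxE.
apply/eqP; rewrite eq_le nz andbT ze mxE.
by apply: sumr_le0 => l _; apply: mulr_ge0_le0.
Qed.
Lemma nn_col {m1 m2 n} (A : 'M[R]_(m1,n)) (B : 'M[R]_(m2,n)) : nn A -> nn B -> nn (col_mx A B).
Proof.
move=> hA hB i j; case: (split_ordP i) => i' ->; by rewrite ?col_mxEu ?col_mxEd.
Qed.

Lemma nn_block {m1 m2 n1 n2} (A : 'M[R]_(m1,n1)) (B : 'M[R]_(m1,n2)) (C : 'M[R]_(m2,n1)) (D : 'M[R]_(m2,n2)) :
  nn A -> nn B -> nn C -> nn D -> nn (block_mx A B C D).
Proof.
move=> hA hB hC hD i j; case: (split_ordP i) => i' ->; case: (split_ordP j) => j' ->;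
by rewrite ?block_mxEul ?block_mxEur ?block_mxEdl ?block_mxEdr.
Qed.

Lemma le_col {m1 m2} (a b : 'cV[R]_m1) (c d : 'cV[R]_m2) :
  (forall i, a i 0 <= b i 0) -> (forall i, c i 0 <= d i 0) ->
  forall i, col_mx a c i 0 <= col_mx b d i 0.
Proof.
move=> h1 h2 i; case: (split_ordP i) => i' ->; by rewrite ?col_mxEu ?col_mxEd.
Qed.

Lemma nn1 {n} : nn (1%:M : 'M[R]_n).
Proof. by move=> i j; rewrite mxE ler0n. Qed.

Lemma nn0 {m n} : nn (0 : 'M[R]_(m,n)).
Proof. by move=> i j; rewrite mxE. Qed.

Lemma mul0_cols {m n p} (A : 'M[R]_(m,n)) (X : 'M[R]_(n,p)) :
  (forall j, A *m (X *m (delta_mx j 0 : 'cV[R]_p)) = 0) -> A *m X = 0.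
Proof.
move=> H; apply/matrixP => i j.
have := H j; rewrite mulmxA => /matrixP /(_ i 0).
by rewrite -colE !mxE.
Qed.

Lemma mp_null {m n} (M N : 'M[R]_(m,n)) Md Nd : is_MP M Md -> is_MP N Nd ->
  (forall x, in_null M x <-> in_null N x) -> Md *m M = Nd *m N.
Proof.
move=> [m1 m2 m3 m4] [n1 n2 n3 n4] H.
have aux : forall (M N : 'M[R]_(m,n)) Md Nd, M *m Md *m M = M -> (Md *m M)^T = Md *m M ->
    N *m Nd *m N = N -> (forall x, in_null N x -> in_null M x) ->
    Md *m M = Md *m M *m (Nd *m N).
  move=> M' N' Md' Nd' e1 e2 e3 HH.
  apply/eqP; rewrite -subr_eq0 -{1}[Md' *m M']mulmx1 -mulmxBr -mulmxA; apply/eqP.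
  apply: mul0_cols => j.
  have -> : M' *m (1%:M - Nd' *m N') *m (delta_mx j 0 : 'cV[R]_n) = 0.
    rewrite -mulmxA; apply: HH.
    by rewrite /in_null mulmxA mulmxBr mulmx1 mulmxA e3 subrr mul0mx.
  by rewrite mulmx0.
have h1 := aux M N Md Nd m1 m4 n1 (fun x => proj2 (H x)).
have h2 := aux N M Nd Md n1 n4 m1 (fun x => proj1 (H x)).
by rewrite h1 -m4 -n4 -trmx_mul -h2 n4.
Qed.

Lemma range_proj {m n p} (P : 'M[R]_(m,n)) Pd (S : 'M[R]_(m,p)) :
  P *m Pd *m P = P -> (forall y, in_range S y -> in_range P y) -> P *m Pd *m S = S.
Proof.
move=> e H; apply/eqP; rewrite -subr_eq0 -{2}[S]mul1mx -mulmxBl; apply/eqP.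
apply: mul0_cols => j.
have [x hx] : in_range P (S *m (delta_mx j 0 : 'cV[R]_p)) by apply: H; exists (delta_mx j 0).
by rewrite hx mulmxA mulmxBl mul1mx e subrr mul0mx.
Qed.

Lemma mp_range {m n} (M N : 'M[R]_(m,n)) Md Nd : is_MP M Md -> is_MP N Nd ->
  (forall y, in_range M y <-> in_range N y) -> M *m Md = N *m Nd.
Proof.
move=> [m1 m2 m3 m4] [n1 n2 n3 n4] H.
have h1 : N *m Nd *m M = M by apply: range_proj => // y /H.
have h2 : M *m Md *m N = N by apply: range_proj => // y /H.
have e1 : N *m Nd *m (M *m Md) = M *m Md by rewrite mulmxA h1.
have e2 : M *m Md *m (N *m Nd) = N *m Nd by rewrite mulmxA h2.
by rewrite -e1 -m3 -n3 -trmx_mul e2 n3.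
Qed.

Lemma key {n m} (P2d : 'M[R]_(n,m)) (B C : 'M[R]_(m,n)) (M : 'M[R]_(n+n))
  (z : 'cV[R]_(n+n)) (y : 'cV[R]_m) lam :
  M = block_mx (P2d *m B) (P2d *m C) 1%:M 0 -> nn M -> nn z -> nn y -> nn P2d ->
  0 < lam -> lam <= spectral_radius M ->
  (forall i, (M *m z) i 0 <= (lam *: z - col_mx (P2d *m y) (0 : 'cV_n)) i 0) ->
  (forall u : 'rV[R]_n, nn u -> (u *m P2d *m y) 0 0 = 0 -> u *m P2d = 0) -> False.
Proof.
move=> eM nM nz ny nP l0 lle H HR.
have sp : 0 < spectral_radius M by apply: lt_le_trans lle.
have nMt : nn M^T by move=> i j; rewrite mxE.
have spt : 0 < spectral_radius M^T by rewrite sr_tr.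
have [w [nw wn0 hw]] := @PF _ M^T nMt spt.
rewrite sr_tr in hw; set rho := spectral_radius M in hw sp lle.
set u := w^T.
have hu : u *m M = rho *: u by rewrite /u -[M]trmxK -trmx_mul hw linearZ.
have nu : nn u by move=> i j; rewrite mxE.
set c := col_mx (P2d *m y) (0 : 'cV_n).
have nc : nn c by apply: nn_col; [exact: nn_mul | exact: nn0].
have s1 : (u *m (M *m z)) 0 0 = rho * (u *m z) 0 0.
  by rewrite mulmxA hu -scalemxAl mxE.
have s2 : (u *m (M *m z)) 0 0 <= lam * (u *m z) 0 0 - (u *m c) 0 0.
  have -> : lam * (u *m z) 0 0 - (u *m c) 0 0 = (u *m (lam *: z - c)) 0 0.
    by rewrite mulmxBr -scalemxAr !mxE.
  rewrite !mxE; apply: ler_sum => i _; apply: ler_wpM2l; [exact: nu | exact: H].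
have uz : 0 <= (u *m z) 0 0 by exact: nn_mul.
have uc : 0 <= (u *m c) 0 0 by exact: nn_mul.
have h2 : lam * (u *m z) 0 0 <= rho * (u *m z) 0 0 by apply: ler_wpM2r.
have uc0 : (u *m c) 0 0 = 0.
  apply/eqP; rewrite eq_le uc andbT.
  move: s2 h2; rewrite s1; set a := rho * _; set b := lam * _; set d := (u *m c) 0 0.
  move=> s2 h2; lra.
rewrite -[u]hsubmxK in hu uc0.
set u1 := lsubmx u in hu uc0; set u2 := rsubmx u in hu uc0.
have nu1 : nn u1 by move=> i j; rewrite mxE; exact: nu.
have hu1 : u1 *m P2d = 0.
  apply: HR => //; move: uc0; rewrite /c mul_row_col mulmx0 addr0 mulmxA //.
move: hu; rewrite eM mul_row_block !mulmxA hu1 !mul0mx !add0r mulmx1 mulmx0.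
rewrite scale_row_mx => /eq_row_mx [e1 e2].
have rn0 : rho != 0 by rewrite gt_eqF.
have u2z : u2 = 0 by move/eqP: e2; rewrite eq_sym scaler_eq0 (negbTE rn0) /= => /eqP.
have u1z : u1 = 0 by move/eqP: e1; rewrite u2z eq_sym scaler_eq0 (negbTE rn0) /= => /eqP.
move/negP: wn0; apply; apply/eqP.
by rewrite -[w]trmxK -/u -[u]hsubmxK -/u1 -/u2 u1z u2z row_mx0 trmx0.
Qed.
Lemma main_thm (m n : nat)
  (A P1 R1 S1 P2 R2 S2 : 'M[R]_(m, n))
  (Ad P1d P2d Ahatd : 'M[R]_(n, m)) :
  is_MP A Ad -> mx_nonneg Ad ->
  double_proper_weak_regular A P1 R1 S1 P1d ->
  double_proper_regular A P2 R2 S2 P2d ->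
  (forall x, in_null P2 x -> in_null S2 x) ->
  (forall y, in_range S2 y -> in_range P2 y) ->
  ~ spectrum (S2 *m P1d) 1 ->
  is_MP ((1%:M - S2 *m P1d) *m A) Ahatd -> mx_nonneg Ahatd ->
  mx_le (P2d *m R2) (P1d *m R1) ->
  mx_le (P1d *m S1) (P2d *m S2) ->
  let W12 := block_mx (P2d *m R2 - P2d *m S2 *m P1d *m R1)
                      (P2d *m S2 *m P1d *m S1) 1%:M 0 in
  let T1 := block_mx (P1d *m R1) (- (P1d *m S1)) 1%:M 0 in
  let T2 := block_mx (P2d *m R2) (- (P2d *m S2)) 1%:M 0 in
  spectral_radius W12 <= Num.min (spectral_radius T1) (spectral_radius T2)
  /\ Num.min (spectral_radius T1) (spectral_radius T2) < 1.
Proof.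
move=> hAMP hAd [[eA1 rng1 nul1] mp1 nP1d nX1 nY1] [[eA2 rng2 nul2] mp2 nP2d nR2 nS2].
move=> _ hrange2 _ _ _ cmpR cmpS W12 T1 T2.
have nnE : forall p q (B : 'M[R]_(p,q)), mx_nonneg B -> nn B.
  by move=> p q B h i j; move: (h i j); rewrite mxE.
have npE : forall p q (B : 'M[R]_(p,q)), mx_nonpos B -> nn (- B).
  by move=> p q B h i j; move: (h i j); rewrite !mxE oppr_ge0.
have Adn := nnE _ _ _ hAd.
have X1n := nnE _ _ _ nX1.
have Y1n := npE _ _ _ nY1.
have P1dn := nnE _ _ _ nP1d.
have P2dn := nnE _ _ _ nP2d.
have R2n := nnE _ _ _ nR2.
have S2n := npE _ _ _ nS2.
have X2n : nn (P2d *m R2) by apply: nn_mul.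
have Y2n : nn (- (P2d *m S2)) by rewrite -mulmxN; apply: nn_mul.
case: (hAMP) => a1 a2 a3 a4.
case: (mp2) => p21 p22 p23 p24.
have Q12 : P1d *m P1 = P2d *m P2.
  by apply: mp_null mp1 mp2 _ => x; split => [/nul1/nul2|/nul2/nul1].
have Q2A : P2d *m P2 = Ad *m A by apply: mp_null mp2 hAMP _.
have R2A : P2 *m P2d = A *m Ad by apply: mp_range mp2 hAMP _.
set y : 'cV[R]_m := Ad^T *m const_mx 1.
have ny : nn y by apply: nn_mul => // i j; rewrite !mxE.
have hAAd : A *m Ad *m Ad^T = Ad^T.
  have e : Ad^T = (Ad *m (A *m Ad))^T by rewrite mulmxA a2.
  by rewrite {2}e trmx_mul a3.
have hy : A *m Ad *m y = y by rewrite /y mulmxA hAAd.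
have HR : forall u : 'rV[R]_n, nn u -> (u *m P2d *m y) 0 0 = 0 -> u *m P2d = 0.
  move=> u nu; set r := u *m P2d => hr.
  have nr : nn r by apply: nn_mul.
  have nrA : nn (r *m Ad^T) by apply: nn_mul => // i j; rewrite mxE.
  have rA0 : r *m Ad^T = 0.
    move: hr; rewrite /y mulmxA mxE => /eqP.
    under eq_bigr do rewrite [const_mx _ _ _]mxE mulr1.
    rewrite psumr_eq0; last by move=> j _; exact: nrA.
    move=> /allP h; apply/matrixP => i j; rewrite (ord1 i) [RHS]mxE.
    by have := h j (mem_index_enum _) => /eqP.
  have e : r = r *m (P2 *m P2d) by rewrite /r -mulmxA (mulmxA P2d) p22.
  by rewrite e R2A -a3 trmx_mul mulmxA rA0 mul0mx.
clearbody y.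
have nT2 : nn T2 by apply: nn_block => //; [exact: nn1 | exact: nn0].
have nT1 : nn T1 by apply: nn_block => //; [exact: nn1 | exact: nn0].
have t2lt1 : spectral_radius T2 < 1.
  rewrite ltNge; apply/negP => h1.
  set x := Ad *m y.
  have nx : nn x by apply: nn_mul.
  have hx1 : P2d *m P2 *m x = x by rewrite Q2A /x mulmxA a2.
  have hAx : A *m x = y by rewrite /x mulmxA hy.
  clearbody x.
  have e0 : P2d *m (A *m x) = x - P2d *m R2 *m x + P2d *m S2 *m x.
    by rewrite eA2 mulmxDl mulmxBl !mulmxDr ?mulmxN ?mulmxBr !mulmxA hx1.
  rewrite hAx in e0.
  have e : P2d *m R2 *m x - P2d *m S2 *m x = x - P2d *m y.
    by rewrite e0 opprD opprB addrA [x + _]addrC subrK.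
  apply: (@key n m P2d R2 (- S2) T2 (col_mx x x) y 1) => //.
  - by rewrite /T2 mulmxN.
  - by apply: nn_col.
  - move=> i; rewrite /T2 mul_block_col mul1mx mul0mx addr0 mulNmx scale1r.
    by rewrite opp_col_mx add_col_mx oppr0 addr0 e.
have t21 : spectral_radius T2 <= spectral_radius T1.
  case: (ltrP 0 (spectral_radius T2)) => [sp|le0]; last by apply: le_trans le0 (sr_ge0 _).
  have [z [nz zn0 hz]] := @PF _ T2 nT2 sp.
  have nD : nn (T1 - T2).
    rewrite /T1 /T2 opp_block_mx add_block_mx subrr oppr0 addr0.
    apply: nn_block; try exact: nn0.
    - by move=> i j; move: (cmpR i j); rewrite !mxE subr_ge0.
    - by move=> i j; move: (cmpS i j); rewrite !mxE opprK addrC subr_ge0.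
  apply: (@lower_bound _ T1 z _ nT1 nz zn0) => i.
  have := nn_mul nD nz i 0.
  by rewrite mulmxBl hz !mxE subr_ge0.
have Y2n' : nn (P2d *m - S2) by rewrite mulmxN.
have wle : spectral_radius W12 <= spectral_radius T2.
  rewrite leNgt; apply/negP => hlt.
  set lam := Num.min (spectral_radius W12) 1.
  have hl : spectral_radius T2 < lam by rewrite lt_min hlt t2lt1.
  have l0 : 0 < lam by apply: le_lt_trans (sr_ge0 _) hl.
  have l1 : lam <= 1 by rewrite ge_min lexx orbT.
  have lw : lam <= spectral_radius W12 by rewrite ge_min lexx.
  have [uT nN] := resolvent nT2 hl.
  set z := invmx (lam%:M - T2) *m col_mx (P2d *m y) (0 : 'cV[R]_n).
  have nz : nn z by apply: nn_mul => //; apply: nn_col; [exact: nn_mul | exact: nn0].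
  have hz : (lam%:M - T2) *m z = col_mx (P2d *m y) 0 by rewrite /z mulmxA mulmxV // mul1mx.
  clearbody z.
  rewrite -[z]vsubmxK in hz nz.
  set a := usubmx z in hz nz; set b := dsubmx z in hz nz.
  clearbody a b.
  move: hz; rewrite mulmxBl mul_scalar_mx /T2 mul_block_col mul1mx mul0mx addr0 mulNmx.
  rewrite scale_col_mx opp_col_mx add_col_mx => /eq_col_mx [e1 e2].
  have ha : a = lam *: b by move/eqP: e2; rewrite subr_eq0 eq_sym => /eqP.
  have nb : nn b by move=> i j; have := nz (rshift n i) j; rewrite col_mxEd.
  have e1' : lam ^+ 2 *: b - lam *: (P2d *m R2 *m b) + P2d *m S2 *m b = P2d *m y.
    by rewrite -e1 ha scalerA -expr2 -scalemxAr opprD opprK addrA.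
  have l2 : lam ^+ 2 != 0 by rewrite expf_neq0 // gt_eqF.
  have eb : b = P2d *m (lam^-2 *: (y + lam *: (R2 *m b) - S2 *m b)).
    rewrite -scalemxAr !mulmxDr mulmxN -scalemxAr !mulmxA -e1'.
    by rewrite addrAC addrK subrK scalerA mulVf ?scale1r.
  have hbr : P2d *m P2 *m b = b by rewrite [in LHS]eb mulmxA p22 -eb.
  have hS : P2 *m P2d *m S2 = S2 by apply: range_proj.
  have hA' : P2 *m P2d *m A = A by rewrite R2A a1.
  have hR : P2 *m P2d *m R2 = R2.
    have eR : R2 = P2 + S2 - A by rewrite eA2; apply/matrixP => i j; rewrite !mxE; ring.
    by rewrite eR !mulmxDr ?mulmxN p21 hS hA'.
  have hM : lam ^+ 2 *: (P2 *m b) - lam *: (R2 *m b) + S2 *m b = y.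
    set L := lam ^+ 2 *: (P2 *m b) - lam *: (R2 *m b) + S2 *m b.
    have h1 : P2d *m L = P2d *m y.
      by rewrite /L !mulmxDr mulmxN -!scalemxAr !mulmxA hbr e1'.
    have h2 : P2 *m P2d *m L = L.
      by rewrite /L !mulmxDr mulmxN -!scalemxAr !mulmxA p21 hR hS.
    by rewrite -h2 -mulmxA h1 mulmxA R2A hy.
  have Rb : nn (R2 *m b) by apply: nn_mul.
  have Sb : nn (- (S2 *m b)) by rewrite -mulNmx; apply: nn_mul.
  have hAb : nn (A *m b).
    have eAb : A *m b = P2 *m b - R2 *m b + S2 *m b by rewrite eA2 mulmxDl mulmxBl.
    rewrite eAb; have ny' := ny; rewrite -hM in ny'.
    move: (P2 *m b) (R2 *m b) (S2 *m b) ny' Rb Sb => pb rb sb ny' Rb' Sb' i j.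
    have := ny' i j; have := Rb' i j; have := Sb' i j; rewrite !mxE.
    set P := pb i j; set Rr := rb i j; set S := sb i j => si ri yi.
    have k : lam ^+ 2 * (P - Rr + S) =
        (lam ^+ 2 * P - lam * Rr + S) + lam * (1 - lam) * Rr + (1 - lam ^+ 2) * (- S) by ring.
    have : 0 <= lam ^+ 2 * (P - Rr + S).
      rewrite k; apply: addr_ge0; first apply: addr_ge0 => //.
        by apply: mulr_ge0 => //; apply: mulr_ge0; [exact: ltW | rewrite subr_ge0].
      by apply: mulr_ge0 => //; rewrite subr_ge0 expr_le1 // ltW.
    by rewrite pmulr_rge0 // exprn_gt0.
  have hd : nn (b - (lam *: (P1d *m R1 *m b) - P1d *m S1 *m b)).
    have e3 : P1d *m (A *m b) = b - P1d *m R1 *m b + P1d *m S1 *m b.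
      by rewrite eA1 mulmxDl mulmxBl !mulmxDr ?mulmxN !mulmxA Q12 hbr.
    have nPA : nn (P1d *m (A *m b)) by apply: nn_mul.
    have nXb : nn (P1d *m R1 *m b) by apply: nn_mul.
    rewrite e3 in nPA.
    move: (P1d *m R1 *m b) (P1d *m S1 *m b) nPA nXb => xb yb nPA nXb i j.
    have := nPA i j; have := nXb i j; rewrite !mxE => hx hp.
    have -> : b i j - (lam * xb i j - yb i j) = (b i j - xb i j + yb i j) + (1 - lam) * xb i j by ring.
    by apply: addr_ge0 => //; apply: mulr_ge0 => //; rewrite subr_ge0.
  have nW : nn W12.
    apply: nn_block; [ | | exact: nn1 | exact: nn0].
    - have -> : P2d *m R2 - P2d *m S2 *m P1d *m R1 = P2d *m R2 + (- (P2d *m S2)) *m (P1d *m R1).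
        by rewrite mulNmx !mulmxA.
      by move=> i j; rewrite mxE; apply: addr_ge0; [exact: X2n | exact: nn_mul].
    - have -> : P2d *m S2 *m P1d *m S1 = (- (P2d *m S2)) *m (- (P1d *m S1)).
        by rewrite mulNmx mulmxN opprK !mulmxA.
      exact: nn_mul.
  apply: (@key n m P2d (R2 - S2 *m P1d *m R1) (S2 *m P1d *m S1) W12 (col_mx a b) y lam) => //.
  - by rewrite /W12 mulmxBr !mulmxA.
  move=> i; rewrite /W12 mul_block_col mul1mx mul0mx addr0 scale_col_mx opp_col_mx add_col_mx oppr0 addr0.
  apply: le_col => i'; last by rewrite ha.
  have eqD : (lam *: a - P2d *m y) - ((P2d *m R2 - P2d *m S2 *m P1d *m R1) *m a
      + P2d *m S2 *m P1d *m S1 *m b) =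
      (- (P2d *m S2)) *m (b - (lam *: (P1d *m R1 *m b) - P1d *m S1 *m b)).
    rewrite ha -e1' mulmxBl -!scalemxAr mulNmx !mulmxBr -!scalemxAr !mulmxA.
    move: (P2d *m R2 *m b) (P2d *m S2 *m P1d *m R1 *m b) (P2d *m S2 *m P1d *m S1 *m b) (P2d *m S2 *m b) => Xb Ub Vb Yb.
    apply/matrixP => k l; rewrite !mxE; ring.
  move: (nn_mul Y2n hd i' 0); rewrite -eqD !mxE subr_ge0.
  by [].
by rewrite (min_r t21); split.
Qed.
End PFsec.

Theorem theorem3p6 (R : realType) (m n : nat)
  (A P1 R1 S1 P2 R2 S2 : 'M[R]_(m, n))
  (Ad P1d P2d Ahatd : 'M[R]_(n, m)) :
  (* A is semi-monotone *)
  is_MP A Ad -> mx_nonneg Ad ->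
  double_proper_weak_regular A P1 R1 S1 P1d ->
  double_proper_regular A P2 R2 S2 P2d ->
  (forall x, in_null P2 x -> in_null S2 x) ->
  (forall y, in_range S2 y -> in_range P2 y) ->
  ~ spectrum (S2 *m P1d) 1 ->
  is_MP ((1%:M - S2 *m P1d) *m A) Ahatd -> mx_nonneg Ahatd ->
  mx_le (P2d *m R2) (P1d *m R1) ->
  mx_le (P1d *m S1) (P2d *m S2) ->
  let W12 := block_mx (P2d *m R2 - P2d *m S2 *m P1d *m R1)
                      (P2d *m S2 *m P1d *m S1) 1%:M 0 in
  let T1 := block_mx (P1d *m R1) (- (P1d *m S1)) 1%:M 0 in
  let T2 := block_mx (P2d *m R2) (- (P2d *m S2)) 1%:M 0 in
  spectral_radius W12 <= Num.min (spectral_radius T1) (spectral_radius T2)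
  /\ Num.min (spectral_radius T1) (spectral_radius T2) < 1.
Proof.
exact: main_thm.
Qed.
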